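(* With the matrices defined in the context, let $S_N=\mathbf{B}\mathbf{A_N}^{-1}\mathbf{B}^T$ and $S_D=\mathbf{B}\mathbf{A_D}^{-1}\mathbf{B}^T$. Define $K_1,K_2\in\mathbb{R}^{r\times r}$ by $$K_1=\mathbf{U}\Big(\tfrac{h^2}{2}I_{2n(n-1)}+(\mathbf{B}^T\mathbf{B})^\dagger+(\mathbf{C}^T\mathbf{C})^\dagger\Big)\mathbf{U}^T,\qquad K_2=\mathbf{U}\Big(\tfrac{h^2}{2}I_{2n(n-1)}+(\mathbf{C}^T\mathbf{C})^\dagger\Big)\mathbf{U}^T .$$ Then $K_1,K_2$ are invertible and $$S_D=S_N-(\mathbf{U}\mathbf{B}^\dagger)^T K_1^{-1}(\mathbf{U}\mathbf{B}^\dagger),\qquad S_D^\dagger=S_N^\dagger+(\mathbf{U}\mathbf{B}^\dagger)^T K_2^{-1}(\mathbf{U}\mathbf{B}^\dagger).$$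
   Context: Fix an integer $n\ge 2$ and set $h=1/n$. Let $I_m$ denote the $m\times m$ identity matrix and $\otimes$ the Kronecker product. Let $\mathrm{B}\in\mathbb{R}^{n\times(n-1)}$ be $\mathrm{B}=\frac1h M$, where $M_{i,i}=1$ and $M_{i+1,i}=-1$ for $1\le i\le n-1$, all other entries $0$. Define $\mathrm{B}^u_x=I_n\otimes \mathrm{B}$, $\mathrm{B}^v_y=\mathrm{B}\otimes I_n$, $\mathrm{B}^q_x=I_{n-1}\otimes\mathrm{B}$, $\mathrm{B}^q_y=\mathrm{B}\otimes I_{n-1}$. Let $\mathbf{B}=\begin{bmatrix}-\mathrm{B}^u_x & -\mathrm{B}^v_y\end{bmatrix}\in\mathbb{R}^{n^2\times 2n(n-1)}$ and $\mathbf{C}=\begin{bmatrix}-(\mathrm{B}^q_y)^T & (\mathrm{B}^q_x)^T\end{bmatrix}\in\mathbb{R}^{(n-1)^2\times 2n(n-1)}$, and let $\mathbf{A_N}=\mathbf{B}^T\mathbf{B}+\mathbf{C}^T\mathbf{C}$ (invertible; the Neumann velocity Laplacian). Let $D=\operatorname{diag}(1,0,\dots,0,1)\in\mathbb{R}^{n\times n}$ and let $\mathbf{I}_\sim=\begin{bmatrix}D\otimes I_{n-1} & 0\\ 0 & I_{n-1}\otimes D\end{bmatrix}\in\mathbb{R}^{2n(n-1)\times 2n(n-1)}$, a diagonal $0/1$ matrix of rank $r=4(n-1)$. Let $\mathbf{U}\in\mathbb{R}^{r\times 2n(n-1)}$ be the selection matrix whose rows are the standard basis row vectors $e_j^T$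 for the indices $j$ with $(\mathbf{I}_\sim)_{jj}=1$, so that $\mathbf{U}^T\mathbf{U}=\mathbf{I}_\sim$ and $\mathbf{U}\mathbf{U}^T=I_r$. The Dirichlet velocity Laplacian is $\mathbf{A_D}=\mathbf{A_N}+\frac{2}{h^2}\mathbf{I}_\sim$. The superscript $\dagger$ denotes the Moore–Penrose pseudoinverse. *)

(* Defs.v *)
From HB Require Import structures.
From mathcomp Require Import all_boot all_order all_algebra.
From Stdlib Require Import ClassicalEpsilon.
Set Implicit Arguments. Unset Strict Implicit. Unset Printing Implicit Defensive.
Import Order.TTheory GRing.Theory Num.Theory.
Local Open Scope ring_scope.

Section Defs.
Variable R : realFieldType.

(* Kronecker product: (A ⊗ B)[a*m2 + c, b*n2 + d] = A[a,b] * B[c,d]. *)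
Definition kron m1 n1 m2 n2 (A : 'M[R]_(m1, n1)) (B : 'M[R]_(m2, n2))
  : 'M[R]_(m1 * m2, n1 * n2) :=
  \matrix_(i < m1 * m2, j < n1 * n2)
    \sum_(a < m1) \sum_(c < m2) \sum_(b < n1) \sum_(d < n2)
      (((i : nat) == a * m2 + c)%N && ((j : nat) == b * n2 + d)%N)%:R
        * A a b * B c d.

Definition penrose m n (A : 'M[R]_(m, n)) (X : 'M[R]_(n, m)) : Prop :=
  [/\ A *m X *m A = A, X *m A *m X = X,
      (A *m X)^T = A *m X & (X *m A)^T = X *m A].

Definition pinv m n (A : 'M[R]_(m, n)) : 'M[R]_(n, m) :=
  epsilon (inhabits 0) (penrose A).

Definition Mdiff n : 'M[R]_(n, n.-1) :=
  \matrix_(i < n, j < n.-1)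
    (if (i : nat) == j then 1 else if (i : nat) == j.+1 then -1 else 0).

Definition hh n : R := (n%:R)^-1.

Definition Bmat n : 'M[R]_(n, n.-1) := (hh n)^-1 *: Mdiff n.

Definition Dmat n : 'M[R]_n :=
  \matrix_(i < n, j < n)
    (((i : nat) == j) && (((i : nat) == 0)%N || ((i : nat) == n.-1)))%:R.

(* velocity unknowns: u-block indexed by I_n ⊗ (n-1), v-block by (n-1) ⊗ I_n *)
Definition Nv n := (n * n.-1 + n * n.-1)%N.

Definition castc n p (A : 'M[R]_(p, n.-1 * n)) : 'M[R]_(p, n * n.-1) :=
  castmx (erefl p, mulnC n.-1 n) A.
Definition castsq n (A : 'M[R]_(n.-1 * n)) : 'M[R]_(n * n.-1) :=
  castmx (mulnC n.-1 n, mulnC n.-1 n) A.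

Definition Bux n : 'M[R]_(n * n, n * n.-1) := kron (1%:M : 'M[R]_n) (Bmat n).
Definition Bvy n : 'M[R]_(n * n, n.-1 * n) := kron (Bmat n) (1%:M : 'M[R]_n).
Definition Bqx n : 'M[R]_(n.-1 * n, n.-1 * n.-1) :=
  kron (1%:M : 'M[R]_n.-1) (Bmat n).
Definition Bqy n : 'M[R]_(n * n.-1, n.-1 * n.-1) :=
  kron (Bmat n) (1%:M : 'M[R]_n.-1).

Definition BB n : 'M[R]_(n * n, Nv n) := row_mx (- Bux n) (castc (- Bvy n)).
Definition CC n : 'M[R]_(n.-1 * n.-1, Nv n) :=
  row_mx (- (Bqy n)^T) (castc (Bqx n)^T).

Definition AN n : 'M[R]_(Nv n) := (BB n)^T *m BB n + (CC n)^T *m CC n.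

Definition Isim n : 'M[R]_(Nv n) :=
  block_mx (kron (Dmat n) (1%:M : 'M[R]_n.-1)) 0
           0 (castsq (kron (1%:M : 'M[R]_n.-1) (Dmat n))).

Definition AD n : 'M[R]_(Nv n) := AN n + (2 / (hh n ^+ 2)) *: Isim n.

Definition Jset n : {set 'I_(Nv n)} := [set j | Isim n j j == 1].

Definition Usel n : 'M[R]_(#|Jset n|, Nv n) :=
  \matrix_(i < #|Jset n|, j < Nv n) (enum_val i == j)%:R.

Definition SN n : 'M[R]_(n * n) := BB n *m invmx (AN n) *m (BB n)^T.
Definition SD n : 'M[R]_(n * n) := BB n *m invmx (AD n) *m (BB n)^T.

Definition K1 n : 'M[R]_(#|Jset n|) :=
  Usel n *m ((hh n ^+ 2 / 2) *: 1%:M + pinv ((BB n)^T *m BB n)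
             + pinv ((CC n)^T *m CC n)) *m (Usel n)^T.
Definition K2 n : 'M[R]_(#|Jset n|) :=
  Usel n *m ((hh n ^+ 2 / 2) *: 1%:M + pinv ((CC n)^T *m CC n)) *m (Usel n)^T.

Definition UBd n : 'M[R]_(#|Jset n|, n * n) := Usel n *m pinv (BB n).
End Defs.

(* Main.v *)
Require Import Defs.
From mathcomp Require Import all_boot all_order all_algebra.
From Stdlib Require Import ClassicalEpsilon.
From mathcomp Require Import lra zify ring.
Import Order.TTheory GRing.Theory Num.Theory.
Local Open Scope ring_scope.
Set Implicit Arguments. Unset Strict Implicit. Unset Printing Implicit Defensive.

Section Abstract.
Variable R : realFieldType.

Lemma penrose_uniq m n (A : 'M[R]_(m,n)) X Y : penrose A X -> penrose A Y -> X = Y.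
Proof.
case=> h1 h2 h3 h4 [g1 g2 g3 g4].
have tA1 : A^T = A^T *m (A *m Y) by rewrite -g3 -trmx_mul g1.
have tA2 : A^T = X *m A *m A^T by rewrite -h4 -trmx_mul mulmxA h1.
have e1 : X = X *m A *m Y.
  have -> : X *m A *m Y = X *m (X^T *m A^T) *m A *m Y.
    by rewrite -trmx_mul h3 !mulmxA h2.
  transitivity (X *m (X^T *m (A^T *m (A *m Y)))).
    by rewrite -tA1 -trmx_mul h3 mulmxA h2.
  by rewrite !mulmxA.
have e2 : Y = X *m A *m Y.
  have -> : X *m A *m Y = X *m A *m (A^T *m Y^T) *m Y.
    by rewrite -trmx_mul g4 -[X *m A *m (Y *m A) *m Y]mulmxA g2.
  transitivity (X *m A *m A^T *m (Y^T *m Y)).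
    by rewrite -tA2 mulmxA -trmx_mul g4 g2.
  by rewrite !mulmxA.
by rewrite e1 -e2.
Qed.

Lemma pinv_eq m n (A : 'M[R]_(m,n)) X : penrose A X -> pinv A = X.
Proof.
move=> hX; apply: (@penrose_uniq _ _ A) => //.
rewrite /pinv; apply: (epsilon_spec (inhabits 0) (penrose A)); by exists X.
Qed.
End Abstract.

Section Abstract2.
Variable R : realFieldType.

Definition sq k (y : 'rV[R]_k) : R := (y *m y^T) 0 0.

Lemma sqE k (y : 'rV[R]_k) : sq y = \sum_i y 0 i ^+ 2.
Proof. by rewrite /sq mxE; apply: eq_bigr => i _; rewrite mxE expr2. Qed.

Lemma sq_ge0 k (y : 'rV[R]_k) : 0 <= sq y.
Proof. by rewrite sqE; apply: sumr_ge0 => i _; apply: sqr_ge0. Qed.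

Lemma sq_eq0 k (y : 'rV[R]_k) : sq y = 0 -> y = 0.
Proof.
rewrite sqE => h; apply/rowP => i; rewrite mxE.
have := psumr_eq0P (fun i _ => sqr_ge0 (y 0 i)) h (i:=i) isT.
by move/eqP; rewrite sqrf_eq0 => /eqP.
Qed.

Lemma unit_ker k (K : 'M[R]_k) : (forall x : 'rV_k, x *m K = 0 -> x = 0) -> K \in unitmx.
Proof.
move=> H; rewrite -row_free_unit -kermx_eq0; apply/eqP/row_matrixP => i.
by rewrite row0; apply: H; rewrite -row_mul mulmx_ker row0.
Qed.

Lemma addE m n (A B : 'M[R]_(m,n)) i j : (A + B) i j = A i j + B i j.
Proof. by rewrite mxE. Qed.

Lemma posdef k p1 p2 (a : R) (M1 : 'M[R]_(p1,k)) (M2 : 'M[R]_(p2,k)) :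
  0 < a -> a *: 1%:M + M1^T *m M1 + M2^T *m M2 \in unitmx.
Proof.
move=> ha; apply: unit_ker => x hx.
have e : (x *m (a *: 1%:M + M1^T *m M1 + M2^T *m M2) *m x^T) 0 0 = 0 by rewrite hx mul0mx mxE.
move: e; rewrite !mulmxDr !mulmxDl !addE.
have -> : (x *m (a *: 1%:M) *m x^T) 0 0 = a * sq x.
  by rewrite scalemx1 mul_mx_scalar -scalemxAl mxE.
have -> : (x *m (M1^T *m M1) *m x^T) 0 0 = sq (x *m M1^T).
  by rewrite /sq trmx_mul trmxK !mulmxA.
have -> : (x *m (M2^T *m M2) *m x^T) 0 0 = sq (x *m M2^T).
  by rewrite /sq trmx_mul trmxK !mulmxA.
move=> e; apply: sq_eq0.
have h1 := sq_ge0 x; have h2 := sq_ge0 (x *m M1^T); have h3 := sq_ge0 (x *m M2^T).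
nra.
Qed.
End Abstract2.

Section Abstract3.
Variable R : realFieldType.

Lemma inv_comm k (A M : 'M[R]_k) : A \in unitmx -> A *m M = M *m A ->
  invmx A *m M = M *m invmx A.
Proof.
move=> hA hc.
rewrite -[invmx A *m M]mulmx1 -(mulmxV hA) mulmxA -(mulmxA (invmx A)) -hc.
by rewrite mulmxA (mulVmx hA) mul1mx.
Qed.

Lemma pinv_gram p N (Bx : 'M[R]_(p,N)) (Ai : 'M[R]_N) :
  Ai^T = Ai -> Bx *m Ai *m (Bx^T *m Bx) = Bx ->
  Ai *m (Bx^T *m Bx) = (Bx^T *m Bx) *m Ai ->
  pinv (Bx^T *m Bx) = Ai *m (Bx^T *m Bx) *m Ai.
Proof.
set G := Bx^T *m Bx => hs hB hc.
have hG : G^T = G by rewrite /G trmx_mul trmxK.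
have GAG : G *m Ai *m G = G.
  by transitivity (Bx^T *m (Bx *m Ai *m G)); [rewrite /G !mulmxA | rewrite hB].
clearbody G.
have GAGl k (X : 'M_(k,N)) : X *m G *m Ai *m G = X *m G.
  by rewrite -2!mulmxA (mulmxA G) GAG.
apply: pinv_eq; split.
- by rewrite !mulmxA ?GAGl ?GAG.
- by rewrite !mulmxA ?GAGl.
- by rewrite !mulmxA ?GAG trmx_mul hs hG hc.
- by rewrite ?GAGl trmx_mul hs hG hc.
Qed.

Lemma wood2 n r (P : 'M[R]_n) (W : 'M[R]_(r,n)) (K1 K2 : 'M[R]_r) :
  K1 \in unitmx -> K2 \in unitmx -> P^T = P -> P *m P = P -> P *m W^T = W^T ->
  W *m W^T = K1 - K2 ->
  penrose (P - W^T *m invmx K1 *m W) (P + W^T *m invmx K2 *m W).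
Proof.
move=> u1 u2 hPs hPP hPW hWW.
have hWP : W *m P = W by rewrite -[W]trmxK -hPs -trmx_mul hPW.
set V1 := W^T *m invmx K1 *m W; set V2 := W^T *m invmx K2 *m W.
have PV1 : P *m V1 = V1 by rewrite /V1 !mulmxA hPW.
have PV2 : P *m V2 = V2 by rewrite /V2 !mulmxA hPW.
have V1P : V1 *m P = V1 by rewrite /V1 -mulmxA hWP.
have V2P : V2 *m P = V2 by rewrite /V2 -mulmxA hWP.
have V12 : V1 *m V2 = V2 - V1.
  have -> : V1 *m V2 = W^T *m (invmx K1 *m (W *m W^T) *m invmx K2) *m W.
    by rewrite /V1 /V2 !mulmxA.
  rewrite hWW mulmxBr mulmxBl (mulVmx u1) mul1mx -(mulmxA (invmx K1) K2) (mulmxV u2) mulmx1.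
  by rewrite mulmxBr mulmxBl.
have V21 : V2 *m V1 = V2 - V1.
  have -> : V2 *m V1 = W^T *m (invmx K2 *m (W *m W^T) *m invmx K1) *m W.
    by rewrite /V1 /V2 !mulmxA.
  rewrite hWW mulmxBr mulmxBl -(mulmxA (invmx K2) K1) (mulmxV u1) mulmx1 (mulVmx u2) mul1mx.
  by rewrite mulmxBr mulmxBl.
have AX : (P - V1) *m (P + V2) = P.
  rewrite mulmxBl !mulmxDr hPP PV2 V1P V12.
  have -> : V1 + (V2 - V1) = V2 by rewrite addrC subrK.
  by rewrite addrK.
have XA : (P + V2) *m (P - V1) = P.
  rewrite mulmxDl !mulmxBr hPP PV1 V2P V21.
  have -> : V2 - (V2 - V1) = V1 by rewrite opprB addrC subrK.
  by rewrite subrK.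
split.
- by rewrite AX mulmxBr hPP PV1.
- by rewrite XA mulmxDr hPP PV2.
- by rewrite AX hPs.
- by rewrite XA hPs.
Qed.
End Abstract3.

Section Abstract4.
Variable R : realFieldType.

Lemma abstract_main p q r N (B : 'M[R]_(p,N)) (C : 'M[R]_(q,N)) (U : 'M[R]_(r,N)) (a c : R) :
  (B^T *m B + C^T *m C) \in unitmx -> B *m C^T = 0 -> U *m U^T = 1%:M -> c * a = 1 -> 0 < a ->
  [/\ U *m (a *: 1%:M + pinv (B^T *m B) + pinv (C^T *m C)) *m U^T \in unitmx,
      U *m (a *: 1%:M + pinv (C^T *m C)) *m U^T \in unitmx,
      B *m invmx (B^T *m B + C^T *m C + c *: (U^T *m U)) *m B^T =
        B *m invmx (B^T *m B + C^T *m C) *m B^T - (U *m pinv B)^T *m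
        invmx (U *m (a *: 1%:M + pinv (B^T *m B) + pinv (C^T *m C)) *m U^T) *m (U *m pinv B)
    & pinv (B *m invmx (B^T *m B + C^T *m C + c *: (U^T *m U)) *m B^T) =
      pinv (B *m invmx (B^T *m B + C^T *m C) *m B^T) + (U *m pinv B)^T *m
        invmx (U *m (a *: 1%:M + pinv (C^T *m C)) *m U^T) *m (U *m pinv B)].
Proof.
move=> uA hBC hUU hca ha.
have hCB : C *m B^T = 0 by rewrite -[C]trmxK -trmx_mul hBC trmx0.
have hBH : B *m (C^T *m C) = 0 by rewrite mulmxA hBC mul0mx.
have hCG : C *m (B^T *m B) = 0 by rewrite mulmxA hCB mul0mx.
have hGH : (B^T *m B) *m (C^T *m C) = 0 by rewrite -mulmxA hBH mulmx0.
have hHG : (C^T *m C) *m (B^T *m B) = 0 by rewrite -mulmxA hCG mulmx0.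
move: uA; set G := B^T *m B; set H := C^T *m C => uA.
have hGs : G^T = G by rewrite /G trmx_mul trmxK.
have hHs : H^T = H by rewrite /H trmx_mul trmxK.
have eG : B^T *m B = G by [].
have eH : C^T *m C = H by [].
clearbody G H.
move: hBH hCG hGH hHG; rewrite eG eH => hBH hCG hGH hHG.
set A := G + H.
have hAs : A^T = A by rewrite /A linearD /= hGs hHs.
have eA : G + H = A by [].
clearbody A.
move: uA; rewrite eA => uA.
set Ai := invmx A.
have hAi : Ai^T = Ai by rewrite /Ai trmx_inv hAs.
have AiA : Ai *m A = 1%:M by rewrite /Ai mulVmx.
have AAi : A *m Ai = 1%:M by rewrite /Ai mulmxV.
have eAi : invmx A = Ai by [].
clearbody Ai.
have hAG : A *m G = G *m A by rewrite -eA mulmxDl mulmxDr hGH hHG.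
have hAH : A *m H = H *m A by rewrite -eA mulmxDl mulmxDr hGH hHG.
have cG : Ai *m G = G *m Ai by rewrite -eAi; exact: inv_comm uA hAG.
have cH : Ai *m H = H *m Ai by rewrite -eAi; exact: inv_comm uA hAH.
have hBAG : B *m Ai *m G = B.
  have eB : B *m (Ai *m A) = B by rewrite AiA mulmx1.
  by rewrite -{2}eB -eA mulmxDr mulmxDr cH (mulmxA B H) hBH mul0mx addr0 mulmxA.
have hCAH : C *m Ai *m H = C.
  have eC : C *m (Ai *m A) = C by rewrite AiA mulmx1.
  by rewrite -{2}eC -eA mulmxDr mulmxDr cG (mulmxA C G) hCG mul0mx add0r mulmxA.
have hGAB : G *m Ai *m B^T = B^T.
  by rewrite -{2}hBAG !trmx_mul hGs hAi mulmxA.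
have GAG : G *m Ai *m G = G.
  transitivity (B^T *m (B *m Ai *m G)); first by rewrite -eG !mulmxA.
  by rewrite hBAG.
have HAH : H *m Ai *m H = H.
  transitivity (C^T *m (C *m Ai *m H)); first by rewrite -eH !mulmxA.
  by rewrite hCAH.
have hGAGl k (X : 'M_(k,N)) : X *m G *m Ai *m G = X *m G.
  by rewrite -2!mulmxA (mulmxA G) GAG.
have hHAHl k (X : 'M_(k,N)) : X *m H *m Ai *m H = X *m H.
  by rewrite -2!mulmxA (mulmxA H) HAH.
have pG : pinv G = Ai *m G *m Ai.
  by move: hBAG cG; rewrite -eG => hh1 hh2; exact: pinv_gram hAi hh1 hh2.
have pH : pinv H = Ai *m H *m Ai.
  by move: hCAH cH; rewrite -eH => hh1 hh2; exact: pinv_gram hAi hh1 hh2.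
have pB : pinv B = Ai *m B^T.
  apply: pinv_eq; split.
  - by rewrite !mulmxA -(mulmxA _ B^T B) eG hBAG.
  - by rewrite -!mulmxA (mulmxA B^T) eG (mulmxA G) hGAB.
  - by rewrite !trmx_mul trmxK hAi mulmxA.
  - by rewrite -mulmxA eG trmx_mul hGs hAi cG.
have AiE : Ai *m G *m Ai + Ai *m H *m Ai = Ai.
  by rewrite -mulmxDl -mulmxDr eA AiA mul1mx.
rewrite pG pH pB.
set K1 := U *m (a *: 1%:M + Ai *m G *m Ai + Ai *m H *m Ai) *m U^T.
set K2 := U *m (a *: 1%:M + Ai *m H *m Ai) *m U^T.
have K1E : K1 = a *: 1%:M + U *m Ai *m U^T.
  by rewrite /K1 -addrA AiE mulmxDr mulmxDl scalemx1 mul_mx_scalar -scalemxAl hUU scalemx1.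
have K2E : K2 = a *: 1%:M + U *m (Ai *m H *m Ai) *m U^T.
  by rewrite /K2 mulmxDr mulmxDl scalemx1 mul_mx_scalar -scalemxAl hUU scalemx1.
have u1 : K1 \in unitmx.
  have -> : K1 = a *: 1%:M + (B *m Ai *m U^T)^T *m (B *m Ai *m U^T)
                 + (C *m Ai *m U^T)^T *m (C *m Ai *m U^T).
    rewrite K1E -addrA; congr (_ + _); rewrite !trmx_mul !trmxK hAi.
    by rewrite -{1}AiE mulmxDr mulmxDl -eG -eH !mulmxA.
  exact: posdef.
have u2 : K2 \in unitmx.
  have -> : K2 = a *: 1%:M + (C *m Ai *m U^T)^T *m (C *m Ai *m U^T)
                 + (0 : 'M_(1,r))^T *m 0.
    by rewrite trmx0 mulmx0 addr0 K2E !trmx_mul !trmxK hAi -eH !mulmxA.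
  exact: posdef.
set P := B *m Ai *m B^T.
set W := U *m (Ai *m B^T).
have WT : W^T = B *m Ai *m U^T by rewrite /W !trmx_mul trmxK hAi.
set Y := Ai - Ai *m U^T *m invmx K1 *m U *m Ai.
have UAU : U *m Ai *m U^T = K1 - a *: 1%:M by rewrite K1E addrC addKr.
have hY : (A + c *: (U^T *m U)) *m Y = 1%:M.
  rewrite mulmxDl.
  have e1 : A *m Y = 1%:M - U^T *m invmx K1 *m U *m Ai.
    by rewrite /Y mulmxBr AAi !mulmxA AAi mul1mx.
  have e2 : c *: (U^T *m U) *m Y = U^T *m invmx K1 *m U *m Ai.
    rewrite -scalemxAl /Y mulmxBr.
    have -> : U^T *m U *m (Ai *m U^T *m invmx K1 *m U *m Ai)
        = U^T *m (U *m Ai *m U^T) *m invmx K1 *m U *m Ai by rewrite !mulmxA.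
    have -> : U^T *m (U *m Ai *m U^T) *m invmx K1 *m U *m Ai
        = U^T *m U *m Ai - a *: (U^T *m invmx K1 *m U *m Ai).
      rewrite UAU mulmxBr mulmxBl -(mulmxA U^T K1) (mulmxV u1) mulmx1.
      by rewrite scalemx1 mul_mx_scalar !mulmxBl -!scalemxAl.
    by rewrite opprB addrC subrK scalerA hca scale1r.
  by rewrite e1 e2 subrK.
have iAD : invmx (A + c *: (U^T *m U)) = Y.
  have [uD _] := mulmx1_unit hY.
  by rewrite -[invmx _]mulmx1 -hY mulmxA mulVmx // mul1mx.
have SDE : B *m Y *m B^T = P - W^T *m invmx K1 *m W.
  by rewrite WT /Y mulmxBr mulmxBl /W !mulmxA.
have Ps : P^T = P by rewrite /P !trmx_mul trmxK hAi mulmxA.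
have PP : P *m P = P.
  rewrite /P; transitivity (B *m Ai *m G *m Ai *m B^T); first by rewrite -eG !mulmxA.
  by rewrite hBAG.
have pP : pinv P = P by apply: pinv_eq; split; rewrite ?PP ?Ps.
split => //.
- by rewrite iAD SDE.
rewrite iAD SDE pP; apply: pinv_eq; apply: wood2 => //.
- rewrite WT /P; transitivity (B *m Ai *m G *m Ai *m U^T); first by rewrite -eG !mulmxA.
  by rewrite hBAG.
rewrite WT /K1 /K2 -mulmxBl -mulmxBr.
have -> : a *: 1%:M + Ai *m G *m Ai + Ai *m H *m Ai - (a *: 1%:M + Ai *m H *m Ai)
   = Ai *m G *m Ai.
  by rewrite addrAC opprD addrACA subrr add0r subrK.
by rewrite /W -eG !mulmxA.
Qed.
End Abstract4.
Lemma mki_proof m1 m2 (a : 'I_m1) (c : 'I_m2) : (a * m2 + c < m1 * m2)%N.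
Proof. have := ltn_ord a; have := ltn_ord c; nia. Qed.

Definition mki m1 m2 (a : 'I_m1) (c : 'I_m2) : 'I_(m1 * m2) := Ordinal (mki_proof a c).

Lemma mki_eqn m2 (a a' c c' : nat) : (c < m2)%N -> (c' < m2)%N ->
  (a * m2 + c == a' * m2 + c')%N = (a == a') && (c == c').
Proof.
move=> hc hc'; apply/eqP/andP => [e|[/eqP -> /eqP ->]] //.
have m2p : (0 < m2)%N by case: m2 hc {hc' e}.
have e1 := congr1 (fun x => x %/ m2)%N e; have e2 := congr1 (fun x => x %% m2)%N e.
move: e1 e2 => /=; rewrite !divnMDl // !modnMDl !divn_small // !modn_small // !addn0 => -> ->.
by split.
Qed.

Lemma mki_eq m1 m2 (a a' : 'I_m1) (c c' : 'I_m2) : (mki a c == mki a' c') = (a == a') && (c == c').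
Proof. by rewrite -val_eqE /= mki_eqn. Qed.

Lemma mkiP m1 m2 (i : 'I_(m1 * m2)) : exists a c, i = @mki m1 m2 a c.
Proof.
have m2p : (0 < m2)%N by case: m2 i => [|//] [i]; rewrite muln0.
have h1 : (i %/ m2 < m1)%N by rewrite ltn_divLR.
have h2 : (i %% m2 < m2)%N by rewrite ltn_pmod.
exists (Ordinal h1), (Ordinal h2); apply: val_inj => /=; by rewrite -divn_eq.
Qed.

Lemma ordeq k (x y : 'I_k) : ((x : nat) == y) = (y == x).
Proof. exact: eq_sym. Qed.

Section Kron.
Variable R : realFieldType.

Lemma sum_ind k (y : 'I_k) (F : 'I_k -> R) : \sum_(x < k) (x == y)%:R * F x = F y.
Proof.
rewrite (bigD1 y) //= eqxx mul1r big1 ?addr0 // => x /negbTE ->; by rewrite mul0r.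
Qed.

Lemma kronE m1 n1 m2 n2 (A : 'M[R]_(m1,n1)) (B : 'M[R]_(m2,n2)) a c b d :
  kron A B (mki a c) (mki b d) = A a b * B c d.
Proof.
rewrite mxE.
have tE : forall (a' : 'I_m1) (c' : 'I_m2) (b' : 'I_n1) (d' : 'I_n2),
   (((mki a c : nat) == a' * m2 + c')%N && ((mki b d : nat) == b' * n2 + d')%N)%:R * A a' b' * B c' d'
   = (d' == d)%:R * ((b' == b)%:R * ((c' == c)%:R * ((a' == a)%:R * (A a' b' * B c' d')))).
  move=> a' c' b' d' /=; rewrite !mki_eqn //.
  rewrite !ordeq.
  by case: (a' == a); case: (c' == c); case: (b' == b); case: (d' == d);
    rewrite /= ?mul0r ?mul1r ?mulr0 ?mulr1.
under eq_bigr => a' _ do under eq_bigr => c' _ do under eq_bigr => b' _ do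
  under eq_bigr => d' _ do rewrite tE.
under eq_bigr => a' _ do under eq_bigr => c' _ do under eq_bigr => b' _ do rewrite sum_ind.
under eq_bigr => a' _ do under eq_bigr => c' _ do rewrite sum_ind.
under eq_bigr => a' _ do rewrite sum_ind.
by rewrite sum_ind.
Qed.
Lemma spl1 n1 n2 (k : 'I_(n1 * n2)) : (k %/ n2 < n1)%N.
Proof.
have m2p : (0 < n2)%N by case: n2 k => [|//] [k]; rewrite muln0.
by rewrite ltn_divLR.
Qed.
Lemma spl2 n1 n2 (k : 'I_(n1 * n2)) : (k %% n2 < n2)%N.
Proof.
have m2p : (0 < n2)%N by case: n2 k => [|//] [k]; rewrite muln0.
by rewrite ltn_pmod.
Qed.
Definition spl n1 n2 (k : 'I_(n1 * n2)) : 'I_n1 * 'I_n2 :=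
  (Ordinal (spl1 k), Ordinal (spl2 k)).

Lemma sum_split n1 n2 (F : 'I_(n1 * n2) -> R) :
  \sum_k F k = \sum_(b < n1) \sum_(d < n2) F (mki b d).
Proof.
rewrite pair_big /=.
rewrite (reindex (fun p : 'I_n1 * 'I_n2 => mki p.1 p.2)) //.
exists (@spl n1 n2) => [[b d] _ | k _].
- have m2p : (0 < n2)%N := leq_ltn_trans (leq0n _) (ltn_ord d).
  congr pair; apply: val_inj => /=.
  + by rewrite divnMDl // divn_small // addn0.
  + by rewrite modnMDl modn_small.
- by apply: val_inj => /=; rewrite -divn_eq.
Qed.

Lemma kron_mul m1 n1 p1 m2 n2 p2 (A : 'M[R]_(m1,n1)) (B : 'M[R]_(m2,n2))
  (C : 'M[R]_(n1,p1)) (D : 'M[R]_(n2,p2)) :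
  kron A B *m kron C D = kron (A *m C) (B *m D).
Proof.
apply/matrixP => i j; have [a [c ->]] := mkiP i; have [e [f ->]] := mkiP j.
rewrite mxE kronE !mxE sum_split.
under eq_bigr => b _ do under eq_bigr => d _ do rewrite !kronE.
rewrite mulr_suml; apply: eq_bigr => b _; rewrite mulr_sumr; apply: eq_bigr => d _.
ring.
Qed.

Lemma kron_tr m1 n1 m2 n2 (A : 'M[R]_(m1,n1)) (B : 'M[R]_(m2,n2)) :
  (kron A B)^T = kron A^T B^T.
Proof.
apply/matrixP => i j; have [a [c ->]] := mkiP i; have [e [f ->]] := mkiP j.
by rewrite mxE !kronE !mxE.
Qed.

Lemma kron11 m1 m2 : kron (1%:M : 'M[R]_m1) (1%:M : 'M[R]_m2) = 1%:M.
Proof.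
apply/matrixP => i j; have [a [c ->]] := mkiP i; have [e [f ->]] := mkiP j.
rewrite kronE !mxE mki_eq.
by case: (a == e); case: (c == f); rewrite /= ?mulr1n ?mulr0n ?mulr1 ?mulr0.
Qed.
End Kron.

Section Concrete.
Variable R : realFieldType.

Lemma bnat1 (u : bool) : ((u%:R : R) == 1) = u.
Proof. by case: u; rewrite ?eqxx // eq_sym oner_eq0. Qed.

Lemma bnatM (u v : bool) : (u%:R * v%:R : R) = (u && v)%:R.
Proof. by case: u; case: v; rewrite /= ?mulr1 ?mulr0. Qed.

Definition diag01 k (M : 'M[R]_k) := forall i j, M i j = ((i == j) && (M i i == 1))%:R.

Lemma diag01_kron k1 k2 (D1 : 'M[R]_k1) (D2 : 'M[R]_k2) :
  diag01 D1 -> diag01 D2 -> diag01 (kron D1 D2).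
Proof.
move=> h1 h2 i j; have [a [c ->]] := mkiP i; have [b [d ->]] := mkiP j.
rewrite !kronE h1 h2 (h1 a a) (h2 c c) !eqxx /= (bnat1 (D1 a a == 1)) (bnat1 (D2 c c == 1)) !bnatM (bnat1 ((D1 a a == 1) && (D2 c c == 1))) mki_eq.
by case: (a == b); case: (c == d); case: (D1 a a == 1); case: (D2 c c == 1); rewrite /= ?mulr1 ?mulr0 ?mul1r ?mul0r.
Qed.

Lemma diag01_block k1 k2 (D1 : 'M[R]_k1) (D2 : 'M[R]_k2) :
  diag01 D1 -> diag01 D2 -> diag01 (block_mx D1 0 0 D2).
Proof.
move=> h1 h2 i j.
rewrite -(splitK i) -(splitK j); case: (split i) => i'; case: (split j) => j' /=.
- by rewrite !block_mxEul eq_shift h1.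
- by rewrite block_mxEur block_mxEul eq_shift /= mxE.
- by rewrite block_mxEdl block_mxEdr eq_shift /= mxE.
- by rewrite !block_mxEdr eq_shift h2.
Qed.

Lemma diag01_cast a b (e : a = b) (D : 'M[R]_a) : diag01 D -> diag01 (castmx (e, e) D).
Proof. by case: b / e; rewrite castmx_id. Qed.

Lemma diag01_1 k : diag01 (1%:M : 'M[R]_k).
Proof. by move=> i j; rewrite !mxE eqxx bnat1 andbT. Qed.

Lemma diag01_D n : diag01 (Dmat R n).
Proof. by move=> i j; rewrite !mxE eqxx /= bnat1. Qed.

Lemma diag01_Isim n : diag01 (Isim R n).
Proof.
apply: diag01_block.
- by apply: diag01_kron; [exact: diag01_D | exact: diag01_1].
- rewrite /castsq; apply: (@diag01_cast _ _ (mulnC n.-1 n)). by apply: diag01_kron; [exact: diag01_1 | exact: diag01_D].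
Qed.

Lemma sum_ind1 (T : finType) (y : T) (F : T -> R) : \sum_x (x == y)%:R * F x = F y.
Proof.
rewrite (bigD1 y) //= eqxx mul1r big1 ?addr0 // => x /negbTE ->; by rewrite mul0r.
Qed.

Lemma UUt n : Usel R n *m (Usel R n)^T = 1%:M.
Proof.
apply/matrixP => i i'; rewrite !mxE.
under eq_bigr => j _ do rewrite !mxE eq_sym.
by rewrite sum_ind1 (inj_eq enum_val_inj) eq_sym.
Qed.

Lemma UtU n : (Usel R n)^T *m Usel R n = Isim R n.
Proof.
apply/matrixP => j k; rewrite [RHS]diag01_Isim [LHS]mxE.
under eq_bigr => i _ do rewrite !mxE.
rewrite -(big_enum_val (fun x => (x == j)%:R * (x == k)%:R)) /= big_mkcond /=.
rewrite (eq_bigr (fun x => (x == j)%:R * (if x \in Jset R n then (x == k)%:R else 0))); last first.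
  by move=> x _; case: (x \in Jset R n); rewrite ?mulr0.
by rewrite sum_ind1 inE; case: (Isim R n j j == 1); rewrite ?andbT ?andbF.
Qed.
End Concrete.

Section Concrete2.
Variable R : realFieldType.

Lemma castT_mul a b (e : a = b) p p' (M : 'M[R]_(p,a)) (N : 'M[R]_(p',a)) :
  castmx (erefl p, e) M *m (castmx (erefl p', e) N)^T = M *m N^T.
Proof. by case: b / e; rewrite !castmx_id. Qed.

Lemma cast_sum_mul a b (e : a = b) k p p' (A1 : 'M[R]_(k,p)) (M1 : 'M[R]_(p,a))
  (A2 : 'M[R]_(k,p')) (M2 : 'M[R]_(p',a)) :
  A1 *m castmx (erefl p, e) M1 + A2 *m castmx (erefl p', e) M2
  = castmx (erefl k, e) (A1 *m M1 + A2 *m M2).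
Proof. by case: b / e; rewrite !castmx_id. Qed.

Lemma castmx0 a b (e : a = b) k : castmx (erefl k, e) (0 : 'M[R]_(k,a)) = 0.
Proof. by case: b / e; rewrite castmx_id. Qed.

Lemma cast_inj a b (e : a = b) k (M : 'M[R]_(k,a)) :
  (forall y : 'rV_a, y *m M^T = 0 -> y = 0) ->
  forall x : 'rV_b, x *m (castmx (erefl k, e) M)^T = 0 -> x = 0.
Proof. by case: b / e; rewrite castmx_id. Qed.

Lemma psd2_unit k p1 p2 (M1 : 'M[R]_(p1,k)) (M2 : 'M[R]_(p2,k)) :
  (forall x : 'rV_k, x *m M1^T = 0 -> x = 0) -> M1^T *m M1 + M2^T *m M2 \in unitmx.
Proof.
move=> hinj; apply: unit_ker => x hx.
have e : (x *m (M1^T *m M1 + M2^T *m M2) *m x^T) 0 0 = 0 by rewrite hx mul0mx mxE.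
move: e; rewrite !mulmxDr !mulmxDl !addE.
have -> : (x *m (M1^T *m M1) *m x^T) 0 0 = sq (x *m M1^T).
  by rewrite /sq trmx_mul trmxK !mulmxA.
have -> : (x *m (M2^T *m M2) *m x^T) 0 0 = sq (x *m M2^T).
  by rewrite /sq trmx_mul trmxK !mulmxA.
move=> e; apply: hinj; apply: sq_eq0.
have h2 := sq_ge0 (x *m M1^T); have h3 := sq_ge0 (x *m M2^T).
lra.
Qed.

Definition Lmat n : 'M[R]_(n, n.-1) := hh R n *: \matrix_(i < n, k < n.-1) ((i <= k)%N)%:R.

Lemma MdL n : (Mdiff R n)^T *m \matrix_(i < n, k < n.-1) ((i <= k)%N)%:R = 1%:M.
Proof.
apply/matrixP => j k; rewrite !mxE.
have hj0 : (j < n)%N by have := ltn_ord j; lia.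
have hj1 : (j.+1 < n)%N by have := ltn_ord j; lia.
rewrite (bigD1 (Ordinal hj0)) //= (bigD1 (Ordinal hj1)) /=; last first.
  by rewrite -val_eqE /= eqn_leq ltnn.
rewrite big1 ?addr0; last first.
  move=> i; rewrite -!val_eqE /= => /andP[h1 h2]; rewrite !mxE (negbTE h1) (negbTE h2) mul0r. done.
rewrite !mxE !eqxx /= (_ : (j.+1 == j)%N = false); last by elim: (nat_of_ord j).
rewrite mul1r mulN1r.
case: (ltngtP j k) => h.
- have /negbTE -> : j != k by apply/eqP => e; move: h; rewrite e ltnn.
  by rewrite subrr.
- have /negbTE -> : j != k by apply/eqP => e; move: h; rewrite e ltnn.
  by rewrite subrr.
- have -> : j = k by apply: val_inj.
  by rewrite eqxx subr0.
Qed.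
End Concrete2.

Section Concrete3.
Variable R : realFieldType.

Lemma hh_neq0 n : (0 < n)%N -> hh R n != 0.
Proof. by move=> hn; rewrite /hh invr_eq0 pnatr_eq0 -lt0n. Qed.

Lemma BmL n : (0 < n)%N -> (Bmat R n)^T *m Lmat R n = 1%:M.
Proof.
move=> hn; rewrite /Bmat /Lmat linearZ /=.
have -> : ((hh R n)^-1 *: Mdiff R n)^T = (hh R n)^-1 *: (Mdiff R n)^T.
  by apply/matrixP => i j; rewrite !mxE.
by rewrite -scalemxAl scalerA mulfV ?hh_neq0 // scale1r MdL.
Qed.

Lemma inj_Bux n : (0 < n)%N -> forall x : 'rV[R]_(n * n.-1), x *m (- Bux R n)^T = 0 -> x = 0.
Proof.
move=> hn x; rewrite linearN /= mulmxN => /eqP; rewrite oppr_eq0 => /eqP hx.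
have e : (Bux R n)^T *m kron (1%:M : 'M_n) (Lmat R n) = 1%:M.
  by rewrite /Bux kron_tr trmx1 kron_mul mul1mx BmL // kron11.
by rewrite -[x]mulmx1 -e mulmxA hx mul0mx.
Qed.

Lemma inj_Bvy n : (0 < n)%N -> forall x : 'rV[R]_(n.-1 * n), x *m (- Bvy R n)^T = 0 -> x = 0.
Proof.
move=> hn x; rewrite linearN /= mulmxN => /eqP; rewrite oppr_eq0 => /eqP hx.
have e : (Bvy R n)^T *m kron (Lmat R n) (1%:M : 'M_n) = 1%:M.
  by rewrite /Bvy kron_tr trmx1 kron_mul mul1mx BmL // kron11.
by rewrite -[x]mulmx1 -e mulmxA hx mul0mx.
Qed.

Lemma BC0 n : BB R n *m (CC R n)^T = 0.
Proof.
rewrite /BB /CC tr_row_mx mul_row_col /castc castT_mul !trmxK linearN /= trmxK.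
rewrite mulNmx mulmxN opprK mulNmx /Bux /Bvy /Bqy /Bqx !kron_mul !mul1mx !mulmx1.
by rewrite subrr.
Qed.

Lemma AN_unit n : (0 < n)%N -> AN R n \in unitmx.
Proof.
move=> hn; rewrite /AN /BB /CC !tr_row_mx !mul_col_row add_block_mx.
rewrite [X in block_mx _ X _ _](_ : _ = 0); last first.
  rewrite /castc cast_sum_mul.
  rewrite !linearN /= !trmxK ?mulNmx ?mulmxN ?opprK.
  rewrite /Bux /Bvy /Bqy /Bqx !kron_tr !trmx1 !kron_mul !mul1mx !mulmx1 subrr.
  exact: castmx0.
rewrite unitmxE det_lblock unitrM -!unitmxE.
apply/andP; split.
- apply: psd2_unit; exact: inj_Bux.
- apply: psd2_unit; rewrite /castc; apply: cast_inj; exact: inj_Bvy.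
Qed.
End Concrete3.

Theorem theorem2 (R : realFieldType) (n : nat) (hn : (2 <= n)%N) :
  [/\ K1 R n \in unitmx, K2 R n \in unitmx,
      SD R n = SN R n - (UBd R n)^T *m invmx (K1 R n) *m UBd R n
    & pinv (SD R n) = pinv (SN R n) + (UBd R n)^T *m invmx (K2 R n) *m UBd R n].
Proof.
have hn0 : (0 < n)%N by apply: leq_trans hn.
have hpos : 0 < hh R n by rewrite /hh invr_gt0 ltr0n.
have ha : 0 < hh R n ^+ 2 / 2 by apply: divr_gt0; [apply: exprn_gt0 | rewrite ltr0n].
have hca : 2 / hh R n ^+ 2 * (hh R n ^+ 2 / 2) = 1.
  have h0 : hh R n != 0 by rewrite gt_eqF.
  by field.
have := abstract_main (@AN_unit R n hn0) (BC0 R n) (UUt R n) hca ha.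
by rewrite /K1 /K2 /SD /SN /AD /AN /UBd -(UtU R n).
Qed.
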